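(* For any simple graph $G$ on $n$ vertices, \[|E(G)|-|E(G^{(2)})|\le\left\lfloor\frac n2\right\rfloor.\] Furthermore, equality holds if and only if every connected component of $G$ is a complete bipartite graph $K_{a,b}$ with $|a-b|\le 1$ (an isolated vertex being regarded as $K_{0,1}$) and at most one component of $G$ has an odd number of vertices.
   Context: For a simple graph $G$, $G^{(2)}$ is the graph on $V(G)$ in which $\{u,v\}$ ($u\ne v$) is an edge iff there is $w\in V(G)$ with $\{u,w\},\{v,w\}\in E(G)$. *)

(* Defs.v *)
From mathcomp Require Import all_boot.
Set Implicit Arguments. Unset Strict Implicit. Unset Printing Implicit Defensive.

Definition simple_graph (T : finType) (e : rel T) : Prop :=
  symmetric e /\ irreflexive e.

Definition edges (T : finType) (e : rel T) : {set {set T}} :=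
  [set A : {set T} | [exists x, exists y, e x y && (A == [set x; y])]].

Definition sq_graph (T : finType) (e : rel T) : rel T :=
  fun u v => (u != v) && [exists w, e u w && e v w].

Definition component (T : finType) (e : rel T) (x : T) : {set T} :=
  [set y | connect e x y].

Definition components (T : finType) (e : rel T) : {set {set T}} :=
  [set component e x | x : T].

Definition balanced_complete_bipartite (T : finType) (e : rel T) (C : {set T}) : Prop :=
  exists A B : {set T},
    [/\ A :|: B = C, [disjoint A & B],
        {in C &, forall x y, e x y = ((x \in A) && (y \in B)) || ((x \in B) && (y \in A))}
      & (#|A| <= #|B|.+1 /\ #|B| <= #|A|.+1)].

(* Main.v *)
Require Import Defs.
From mathcomp Require Import all_boot zify.
Set Implicit Arguments. Unset Strict Implicit. Unset Printing Implicit Defensive.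
Definition P (T : finType) (r : rel T) := #|[set p : T * T | r p.1 p.2]|.
Definition res (T : finType) (e : rel T) (S : {set T}) : rel T :=
  fun x y => [&& x \in S, y \in S & e x y].

Section Basics.
Variable T : finType.


Lemma P_ext (r r' : rel T) : (forall x y, r x y = r' x y) -> P r = P r'.
Proof. by move=> h; rewrite /P; apply: eq_card => p; rewrite !inE h. Qed.

Lemma sq_ext (r r' : rel T) : (forall x y, r x y = r' x y) ->
  forall x y, sq_graph r x y = sq_graph r' x y.
Proof.
by move=> h x y; rewrite /sq_graph; congr (_ && _); apply: eq_existsb => w; rewrite !h.
Qed.

Lemma sq_simple (r : rel T) : symmetric r -> simple_graph (sq_graph r).
Proof.
move=> hs; split.
  move=> x y; rewrite /sq_graph eq_sym; congr (_ && _).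
  by apply: eq_existsb => w; rewrite andbC.
by move=> x; rewrite /sq_graph eqxx.
Qed.

Lemma handshake (r : rel T) : simple_graph r -> #|edges r| * 2 = P r.
Proof.
move=> [hs hi].
rewrite /P -[RHS]sum1_card (partition_big_imset (fun p : T * T => [set p.1; p.2])).
have -> : [set [set x.1; x.2] | x in [set p : T * T | r p.1 p.2]] = edges r.
  apply/setP => j; rewrite /edges inE; apply/imsetP/existsP.
    case=> [[x y]]; rewrite inE /= => hxy ->; exists x; apply/existsP; exists y.
    by rewrite hxy eqxx.
  case=> x /existsP [y /andP [hxy /eqP ->]]; exists (x, y) => //.
  by rewrite inE.
rewrite -sum_nat_const; apply: eq_bigr => j.
rewrite /edges inE => /existsP [x /existsP [y /andP [hxy /eqP ->]]].
have hxy' : x != y by apply: contraTneq hxy => ->; rewrite hi.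
rewrite sum1_card.
rewrite (eq_card (B := [set (x, y); (y, x)])).
  rewrite cards2; apply/eqP; rewrite eqSS; apply/eqP.
  by rewrite xpair_eqE negb_and hxy'.
move=> [a b]; rewrite !inE /=.
apply/andP/orP.
  move=> [hab /eqP hE]; rewrite inE /= in hab.
  have ha : a \in [set x; y] by rewrite -hE !inE eqxx.
  have hb : b \in [set x; y] by rewrite -hE !inE eqxx orbT.
  have hab' : a != b.
  by apply: contraTneq hab => /= ->; rewrite hi.
  move: ha hb hab'; rewrite !inE => /orP [] /eqP -> /orP [] /eqP ->;
    rewrite ?eqxx //= ?xpair_eqE ?eqxx ?andbT; auto.
case=> /eqP [-> ->]; rewrite inE /=; split => //; first by rewrite hs.
by rewrite setUC.
Qed.

End Basics.

Section Step.
Variables (T : finType) (e : rel T).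
Hypotheses (hs : symmetric e) (hi : irreflexive e).
Variables (S : {set T}) (u v : T).
Hypothesis huv : res e S u v.

Let S' := S :\ u :\ v.
Let r := res e S.
Let r' := res e S'.
Let q := sq_graph r.
Let q' := sq_graph r'.
Let UV z := (z == u) || (z == v).
Let B := [set p : T * T | UV p.1 || UV p.2].
Definition sw z := if z == u then v else if z == v then u else z.
Let f (p : T * T) := (sw p.1, sw p.2).
Let X := [set p : T * T | r p.1 p.2] :&: B.
Let Y := [set p : T * T | q p.1 p.2] :&: B.
Let Z := f @: (X :\ (u, v) :\ (v, u)).

Lemma uS : u \in S. Proof. by case/and3P: huv. Qed.
Lemma vS : v \in S. Proof. by case/and3P: huv. Qed.
Lemma euv : e u v. Proof. by case/and3P: huv. Qed.
Lemma uv_neq : u != v. Proof. by apply: contraTneq euv => ->; rewrite hi. Qed.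

Lemma F5 : #|S| = #|S'|.+2.
Proof.
rewrite (cardsD1 u S) uS (cardsD1 v (S :\ u)) !inE eq_sym uv_neq vS.
by rewrite add1n.
Qed.

Lemma F1 : P r = P r' + #|X|.
Proof.
rewrite /P -(cardsID B [set p : T * T | r p.1 p.2]) addnC; congr (_ + _).
apply: eq_card => [[x y]]; rewrite !inE /= /r /r' /res /UV !inE.
by case: (x == u); case: (x == v); case: (y == u); case: (y == v);
  rewrite ?andbF ?andbT //= ?andbF.
Qed.

Lemma F2 : P q' + #|Y| <= P q.
Proof.
rewrite /P /Y -(cardsID B [set p : T * T | q p.1 p.2]) addnC leq_add2l.
apply: subset_leq_card; apply/subsetP => [[x y]]; rewrite !inE /= /q /q' /sq_graph.
case/andP => -> /existsP [w /andP []]; rewrite /r' /res !inE.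
case/and3P => /and3P [hxv hxu hx] /and3P [hwv hwu hw] hxw.
case/and3P => /and3P [hyv hyu hy] _ hyw.
rewrite /UV (negbTE hxv) (negbTE hxu) (negbTE hyv) (negbTE hyu) /=.
by apply/existsP; exists w; rewrite /r /res hx hy hw hxw hyw.
Qed.

Lemma swK : cancel sw sw.
Proof.
move=> z; rewrite /sw; have := uv_neq.
case: (eqVneq z u) => [-> | hzu]; first by rewrite eqxx => /negbTE; rewrite eq_sym => ->.
case: (eqVneq z v) => [-> | hzv]; first by rewrite eqxx.
by rewrite (negbTE hzu) (negbTE hzv).
Qed.

Lemma f_inj : injective f.
Proof.
apply: (can_inj (g := f)) => [[x y]]; by rewrite /f /= !swK.
Qed.

Lemma F3 : #|X| <= #|Z| + 2.
Proof.
rewrite /Z card_imset; last exact: f_inj.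
rewrite (cardsD1 (u, v) X) (cardsD1 (v, u) (X :\ (u, v))).
by case: ((u, v) \in X); case: ((v, u) \in X :\ (u, v)); rewrite ?add0n ?add1n ?addn2 ?addn1 ?addn0 /= ?leqnSn // ltnW // ltnW.
Qed.

Lemma F4 : Z \subset Y.
Proof.
apply/subsetP => p /imsetP [[x y]]; rewrite !inE /= => /andP [hneq1 /andP [hneq2 /andP [hxy hB]]] ->.
move: hxy hB; rewrite /r /res => /and3P [hx hy hexy].
have hxy : x != y by apply: contraTneq hexy => ->; rewrite hi.
rewrite /UV /f /sw /= /q /sq_graph.
have hvu : v != u by rewrite eq_sym uv_neq.
case: (eqVneq x u) => [exu | hxu].
  subst x; rewrite eqxx /= => _.
  have hyu : y != u by rewrite eq_sym.
  have hyv : y != v by apply: contraNneq hneq2 => ->.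
  rewrite (negbTE hyu) (negbTE hyv) /= orbT andbT.
  rewrite eq_sym (negbTE hyv) /=; apply/existsP; exists u.
  by rewrite /r /res vS uS hy hs euv hs hexy.
case: (eqVneq x v) => [exv | hxv].
  subst x; rewrite ?eqxx /= => _.
  have hyv : y != v by rewrite eq_sym.
  have hyu : y != u by apply: contraNneq hneq1 => ->.
  rewrite (negbTE hyu) (negbTE hyv) /= andbT.
  rewrite eq_sym (negbTE hyu) /=; apply/existsP; exists v.
  by rewrite /r /res vS uS hy euv hs hexy.
rewrite ?(negbTE hxu) ?(negbTE hxv) /= => hyuv.
case: (eqVneq y u) => [eyu | hyu].
  subst y; rewrite eqxx /= orbT /= andbT (negbTE hxv) /=.
  apply/existsP; exists u; by rewrite /r /res hx uS vS hexy hs euv.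
case: (eqVneq y v) => [eyv | hyv]; last by move: hyuv; rewrite (negbTE hyu) (negbTE hyv).
subst y; rewrite eqxx /= ?orbT /= ?andbT hxu /=.
apply/existsP; exists v; by rewrite /r /res hx uS vS hexy euv.
Qed.

Lemma step_facts :
  [/\ P r = P r' + #|X|, P q' + #|Y| <= P q, #|X| <= #|Z| + 2, Z \subset Y
     & #|S| = #|S'|.+2].
Proof. split; [exact: F1 | exact: F2 | exact: F3 | exact: F4 | exact: F5]. Qed.

End Step.

Lemma ineq (T : finType) (e : rel T) (hs : symmetric e) (hi : irreflexive e) (S : {set T}) :
  P (res e S) <= P (sq_graph (res e S)) + (#|S|./2).*2.
Proof.
elim: {S}#|S|.+1 {-2}S (ltnSn #|S|) => // n IH S hS.
case: (boolP [exists u, exists v, res e S u v]) => [/existsP [u /existsP [v huv]] | hno].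
  have [h1 h2 h3 h4 h5] := step_facts hs hi huv.
  have h4' := subset_leq_card h4.
  have hIH := IH (S :\ u :\ v) (ltac:(rewrite h5 in hS; lia)).
  move: h1 h2 h3 h4' hIH; rewrite h5 /=.
  move: (P _) (P _) (P _) (P _) (#|_|) (#|_|) (#|_|) (#|_|) => *.
  rewrite doubleS; lia.
have -> : P (res e S) = 0.
  apply/eqP; rewrite cards_eq0; apply/eqP/setP => [[x y]]; rewrite !inE /=.
  by apply/negbTE; apply: contra hno => h; apply/existsP; exists x; apply/existsP; exists y.
by [].
Qed.

Lemma tight (T : finType) (e : rel T) (hs : symmetric e) (hi : irreflexive e) (S : {set T}) :
  P (res e S) = P (sq_graph (res e S)) + (#|S|./2).*2 ->
  forall u v w x, res e S u v -> res e S u w -> res e S w x -> x != u -> res e S v x.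
Proof.
move=> heq u v w x huv huw hwx hxu.
have [h1 h2 h3 h4 h5] := step_facts hs hi huv.
have h4' := subset_leq_card h4.
have hIH := ineq hs hi (S :\ u :\ v).
have hYZ : #|[set p | sq_graph (res e S) p.1 p.2]
         :&: [set p : T * T | [|| (p.1 == u) || (p.1 == v), p.2 == u | p.2 == v]]|
   <= #|[set (sw u v p.1, sw u v p.2) | p in [set p | res e S p.1 p.2]
         :&: [set p : T * T | [|| (p.1 == u) || (p.1 == v), p.2 == u | p.2 == v]]
         :\ (u, v) :\ (v, u)]|.
  move: heq h1 h2 h3 h4' hIH; rewrite h5 /= doubleS.
  move: (P _) (P _) (P _) (P _) (#|_|) (#|_|) (#|_|) (#|_|) => *.
  lia.
have := conj h4 hYZ; move/andP; rewrite -eqEcard => /eqP hE.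
have : (u, x) \in [set p | sq_graph (res e S) p.1 p.2]
         :&: [set p : T * T | [|| (p.1 == u) || (p.1 == v), p.2 == u | p.2 == v]].
  rewrite !inE /= eqxx /= andbT /sq_graph eq_sym hxu /=.
  apply/existsP; exists w; rewrite huw.
  by move: hwx; rewrite /res => /and3P [-> -> ]; rewrite hs.
rewrite -hE => /imsetP [[a b] ha [ea eb]].
have hK := swK hi huv.
have ea' : a = v by rewrite -[a]hK -ea /sw eqxx.
have eb' : b = sw u v x by rewrite -[b]hK -eb.
move: ha; rewrite ea' eb' /sw (negbTE hxu).
case: (eqVneq x v) => [-> | hxv]; first by rewrite !inE eqxx.
by rewrite !inE /= => /and3P [_ _ /andP [] ].
Qed.

Definition deg (T : finType) (e : rel T) x := #|[set y | e x y]|.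
Definition bip (T : finType) (e : rel T) (C A B : {set T}) :=
  [/\ A :|: B = C, [disjoint A & B] &
      {in C &, forall x y, e x y = ((x \in A) && (y \in B)) || ((x \in B) && (y \in A))}].

Section Comp.
Variables (T : finType) (e : rel T).
Hypotheses (hs : symmetric e) (hi : irreflexive e).

Lemma comp_self x : x \in component e x.
Proof. by rewrite inE connect0. Qed.

Lemma comp_closed x y z : y \in component e x -> e y z -> z \in component e x.
Proof. rewrite !inE => hxy hyz; apply: connect_trans hxy (connect1 hyz). Qed.

Lemma comp_eq x y : y \in component e x -> component e y = component e x.
Proof.
rewrite inE => hxy; apply/setP => z; rewrite !inE.
apply/idP/idP => h; first exact: connect_trans hxy h.
by apply: connect_trans _ h; rewrite (sym_connect_sym hs).
Qed.

Lemma comp_isolated x : (forall z, ~~ e x z) -> component e x = [set x].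
Proof.
move=> hx; apply/setP => y; rewrite !inE; apply/idP/idP; last by move/eqP ->; rewrite connect0.
case/connectP => [[|z p]] /=; first by move=> _ ->.
by case/andP => hxz; move: (hx z); rewrite hxz.
Qed.

Lemma deg_bipA C A B x y : C = component e x -> bip e C A B -> y \in A ->
  [set z | e y z] = B.
Proof.
move=> hC [hU hD hR] hy.
have hyC : y \in C by rewrite -hU inE hy.
have hyB : y \notin B by rewrite (disjointFr hD hy).
apply/setP => z; rewrite inE.
case: (boolP (z \in C)) => hz.
  by rewrite (hR y z hyC hz) hy (negbTE hyB) /= orbF.
have hzB : z \notin B by apply: contra hz; rewrite -hU inE => ->; rewrite orbT.
rewrite (negbTE hzB); apply/negbTE; apply: contra hz => hyz.
by rewrite hC; apply: comp_closed hyz; rewrite -hC.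
Qed.

Lemma bip_sym C A B : bip e C A B -> bip e C B A.
Proof.
move=> [hU hD hR]; split; first by rewrite setUC.
  by rewrite disjoint_sym.
by move=> a b ha hb; rewrite hR // orbC.
Qed.

Lemma deg2_bipA C A B x y : C = component e x -> bip e C A B -> y \in A ->
  [set z | sq_graph e y z] = if B == set0 then set0 else A :\ y.
Proof.
move=> hC hb hy.
have hNA := deg_bipA hC hb hy.
have hNB w : w \in B -> [set z | e w z] = A := deg_bipA hC (bip_sym hb).
apply/setP => z; rewrite /sq_graph inE.
case: (eqVneq B set0) => [hB0 | hBn].
  rewrite inE; apply/negbTE; rewrite negb_and; apply/orP; right.
  rewrite negb_exists; apply/forallP => w; apply/negP => /andP [hyw _].
  have : w \in [set z | e y z] by rewrite inE.
  by rewrite hNA hB0 inE.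
rewrite !inE eq_sym; congr (_ && _).
case/set0Pn: hBn => w0 hw0.
apply/existsP/idP.
  case=> w /andP [hyw hzw].
  have hw : w \in B by rewrite -hNA inE.
  by rewrite -(hNB w hw) inE hs.
move=> hz; exists w0; apply/andP; split.
  have : w0 \in [set z | e y z] by rewrite hNA.
  by rewrite inE.
have : z \in [set z | e w0 z] by rewrite hNB.
by rewrite inE hs.
Qed.

Lemma sumU (F : T -> nat) (C A B : {set T}) : A :|: B = C -> [disjoint A & B] ->
  \sum_(y in C) F y = \sum_(y in A) F y + \sum_(y in B) F y.
Proof.
move=> hU hD; rewrite -bigU //; apply: eq_bigl => y; by rewrite -hU !inE.
Qed.

Lemma W_bip C A B x : C = component e x -> bip e C A B ->
  \sum_(y in C) (deg (sq_graph e) y).+1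
    = \sum_(y in C) deg e y + ((#|A| - #|B|) + (#|B| - #|A|)) ^ 2.
Proof.
move=> hC hb; have [hU hD hR] := hb.
have hbs := bip_sym hb.
rewrite !(sumU _ hU hD).
have h1 : \sum_(y in A) deg e y = #|A| * #|B|.
  rewrite -sum_nat_const; apply: eq_bigr => y hy; by rewrite /deg (deg_bipA hC hb hy).
have h2 : \sum_(y in B) deg e y = #|B| * #|A|.
  rewrite -sum_nat_const; apply: eq_bigr => y hy; by rewrite /deg (deg_bipA hC hbs hy).
have h3 : \sum_(y in A) (deg (sq_graph e) y).+1 = #|A| * (if B == set0 then 0 else #|A| - 1).+1.
  rewrite -sum_nat_const; apply: eq_bigr => y hy; rewrite /deg (deg2_bipA hC hb hy).
  by case: (B == set0); rewrite ?cards0 // (cardsD1 y A) hy add1n subn1.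
have h4 : \sum_(y in B) (deg (sq_graph e) y).+1 = #|B| * (if A == set0 then 0 else #|B| - 1).+1.
  rewrite -sum_nat_const; apply: eq_bigr => y hy; rewrite /deg (deg2_bipA hC hbs hy).
  by case: (A == set0); rewrite ?cards0 // (cardsD1 y B) hy add1n subn1.
rewrite h1 h2 h3 h4.
have hxC : x \in C by rewrite hC comp_self.
have single : forall A B, bip e C A B -> B = set0 -> #|A| = 1.
  move=> A' B' hb' hB0.
  have [hU' _ _] := hb'.
  have hxA : x \in A' by move: hxC; rewrite -hU' hB0 setU0.
  have hiso : forall z, ~~ e x z.
    move=> z; have := deg_bipA hC hb' hxA.
    move/setP/(_ z); rewrite inE hB0 inE => ->; by [].
  by rewrite -(setU0 A') -hB0 hU' hC comp_isolated // cards1.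
case: (eqVneq B set0) => [hB0 | hBn].
  have hA1 := single _ _ hb hB0.
  rewrite hB0 cards0 hA1 /=.
  have -> : (A == set0) = false by apply/negbTE/set0Pn; apply/card_gt0P; rewrite hA1.
  by [].
case: (eqVneq A set0) => [hA0 | hAn].
  have hB1 := single _ _ hbs hA0.
  by rewrite hA0 cards0 hB1.
have ha : 0 < #|A| by rewrite card_gt0.
have hb0 : 0 < #|B| by rewrite card_gt0.
move: ha hb0; move: #|A| #|B| => a b ha hb0.
case: (leqP a b) => h; nia.
Qed.

End Comp.

Section Exists.
Variables (T : finType) (e : rel T).
Hypotheses (hs : symmetric e) (hi : irreflexive e).
Hypothesis hcl : forall u v w x, e u v -> e u w -> e w x -> x != u -> e v x.

Lemma same_nbr u v w : e u v -> e u w -> forall z, e v z = e w z.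
Proof.
move=> huv huw z; apply/idP/idP => h.
  case: (eqVneq z u) => [-> | hzu]; first by rewrite hs.
  exact: hcl huw huv h hzu.
case: (eqVneq z u) => [-> | hzu]; first by rewrite hs.
exact: hcl huv huw h hzu.
Qed.

Lemma bip_exists x : exists A B, bip e (component e x) A B.
Proof.
case: (boolP [exists v, e x v]) => [/existsP [v hxv] | hno].
  have hvx : e v x by rewrite hs.
  exists [set y | e v y], [set y | e x y].
  have NA y : e v y -> forall z, e y z = e x z by move=> hvy; apply: same_nbr hvy hvx.
  have NB y : e x y -> forall z, e y z = e v z by move=> hxy; apply: same_nbr hxy hxv.
  have hdis : [disjoint [set y | e v y] & [set y | e x y]].
    rewrite -setI_eq0; apply/eqP/setP => y; rewrite !inE.
    apply/negbTE/negP => /andP [hvy hxy].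
    by have := NA y hvy y; rewrite hxy hi.
  have hU : [set y | e v y] :|: [set y | e x y] = component e x.
    apply/setP => y; apply/idP/idP.
      rewrite !inE => /orP [hvy | hxy].
        by apply: connect_trans (connect1 hxv) (connect1 hvy).
      exact: connect1.
    rewrite inE => hc.
    have hcl' : closed e ([set y | e v y] :|: [set y | e x y]).
      have dir a b : e a b -> a \in [set y | e v y] :|: [set y | e x y] ->
                     b \in [set y | e v y] :|: [set y | e x y].
        move=> hab; rewrite !inE => /orP [hva | hxa].
          by rewrite -(NA a hva) hab orbT.
        by rewrite -(NB a hxa) hab.
      move=> a b hab; apply/idP/idP; first exact: dir.
      by apply: dir; rewrite hs.
    by rewrite -(closed_connect hcl' hc) !inE hvx.
  split => //.
  move=> a b ha hb; rewrite !inE.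
  case: (boolP (e v a)) => hva /=.
    have hxa : ~~ e x a by apply/negP => hxa; move: hdis; rewrite -setI_eq0 => /eqP/setP/(_ a); rewrite !inE hva hxa.
    rewrite (negbTE hxa) /= ?andbF ?orbF NA //.
  have : a \in [set y | e v y] :|: [set y | e x y] by rewrite hU.
  rewrite !inE (negbTE hva) /= => hxa.
  by rewrite hxa NB.
have hiso : forall z, ~~ e x z by move=> z; apply: contra hno => h; apply/existsP; exists z.
exists [set x], set0; rewrite comp_isolated //; split.
- by rewrite setU0.
- by rewrite -setI_eq0 setI0.
move=> a b; rewrite !inE => /eqP -> /eqP ->; by rewrite hi andbF.
Qed.

End Exists.

Section Part.
Variables (T : finType) (e : rel T).
Hypotheses (hs : symmetric e).

Lemma comps_triv : trivIset (components e).
Proof.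
apply/trivIsetP => A B /imsetP [x _ ->] /imsetP [y _ ->] hne.
rewrite -setI_eq0; apply/eqP/setP => z; rewrite !inE.
apply/negbTE/negP => /andP [hxz hyz]; move/negP: hne; apply.
have hy : y \in component e x.
  rewrite inE; apply: connect_trans hxz _; by rewrite (sym_connect_sym hs).
by rewrite (comp_eq hs hy).
Qed.

Lemma sum_comp (F : T -> nat) :
  \sum_y F y = \sum_(C in components e) \sum_(y in C) F y.
Proof.
rewrite -(big_trivIset _ comps_triv); apply: eq_bigl => y.
apply/esym/bigcupP; exists (component e y); first exact: imset_f.
exact: comp_self.
Qed.

End Part.

Lemma arith_odd a b : odd (a + b) <= ((a - b) + (b - a)) ^ 2 /\
  (a <= b.+1 -> b <= a.+1 -> ((a - b) + (b - a)) ^ 2 = odd (a + b)) /\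
  (((a - b) + (b - a)) ^ 2 <= 1 -> a <= b.+1 /\ b <= a.+1).
Proof.
wlog hab : a b / a <= b.
  move=> h; case: (leqP a b) => hab; first exact: h.
  have := h b a (ltnW hab); rewrite addnC [(b - a) + _]addnC.
  by case=> [h1 [h2 h3]]; split => //; split => [*|/h3 []]; [apply: h2 | ].
have [k ->] : exists k, b = a + k by exists (b - a); lia.
have -> : (a - (a + k)) + (a + k - a) = k by lia.
rewrite addnA addnn oddD odd_double /=.
split; first by case: k => //= k; apply: leq_trans (leq_b1 _) _; rewrite expn_gt0.
split.
  move=> _ h; have : k <= 1 by lia.
  by case: k {h} => [|[|]].
move=> h; have : k <= 1 by case: k h => [|[|k]] //; rewrite !expnS.
lia.
Qed.

Unset Implicit Arguments.
Theorem mainTheorem14 (T : finType) (e : rel T) :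
  simple_graph e ->
  #|edges e| <= #|edges (sq_graph e)| + #|T|./2 /\
  (#|edges e| = #|edges (sq_graph e)| + #|T|./2 <->
     (forall C, C \in components e -> balanced_complete_bipartite e C) /\
     #|[set C in components e | odd #|C|]| <= 1).
Proof.
move=> [hs hi].
have hE1 := handshake (conj hs hi).
have hE2 := handshake (sq_simple hs).
have hres : forall x y, res e setT x y = e x y by move=> x y; rewrite /res !inE.
have hPe : P (res e setT) = P e := P_ext hres.
have hPq : P (sq_graph (res e setT)) = P (sq_graph e) := P_ext (sq_ext hres).
have hin := ineq hs hi setT; rewrite hPe hPq cardsT in hin.
have hsumd : forall r : rel T, \sum_y deg r y = P r.
  move=> r; rewrite /P -sum1_card (eq_bigl (fun p : T * T => r p.1 p.2)); last first.
    by move=> p; rewrite inE.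
  rewrite -(pair_big_dep xpredT (fun x y => r x y) (fun _ _ => 1)) /=.
  apply: eq_bigr => x _; by rewrite /deg -sum1_card; apply: eq_bigl => y; rewrite inE.
set W1 := fun C : {set T} => \sum_(y in C) (deg (sq_graph e) y).+1.
set W2 := fun C : {set T} => \sum_(y in C) deg e y.
have hS2 : \sum_(C in components e) W2 C = P e by rewrite -hsumd (sum_comp hs).
have hS1 : \sum_(C in components e) W1 C = P (sq_graph e) + #|T|.
  rewrite /W1 -(sum_comp hs (fun y => (deg (sq_graph e) y).+1)).
  rewrite (eq_bigr (fun y => deg (sq_graph e) y + 1)); last by move=> y _; rewrite addn1.
  by rewrite big_split /= hsumd sum1_card.
have hn : \sum_(C in components e) #|C| = #|T|.
  have -> : #|T| = \sum_(y : T) 1 by rewrite sum1_card.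
  rewrite (sum_comp hs); apply: eq_bigr => C _; by rewrite sum1_card.
have hodd : #|[set C in components e | odd #|C|]| = \sum_(C in components e) odd #|C|.
  rewrite -sum1_card (eq_bigl (fun C => (C \in components e) && odd #|C|)); last first.
    by move=> C; rewrite inE.
  by rewrite -big_mkcondr /=; rewrite big_mkcond /=; apply: eq_bigr => C _; case: (odd _).
have hdelta : forall C A B, C \in components e -> bip e C A B ->
    W1 C = W2 C + ((#|A| - #|B|) + (#|B| - #|A|)) ^ 2 /\ #|C| = #|A| + #|B|.
  move=> C A B /imsetP [x _ hC] hb; split; first by rewrite /W1 /W2; apply: (W_bip hs hC hb).
  have [hU hD _] := hb.
  rewrite -hU cardsU; move: hD; rewrite -setI_eq0 => /eqP ->; by rewrite cards0 subn0.
set D := fun C : {set T} => W1 C - W2 C.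
have hkey : (forall C, C \in components e -> exists A B, bip e C A B) ->
    \sum_(C in components e) W1 C = \sum_(C in components e) W2 C + \sum_(C in components e) D C.
  move=> hall; rewrite -big_split /=; apply: eq_bigr => C hC.
  have [A [B hb]] := hall C hC.
  have [hW _] := hdelta C A B hC hb; rewrite /D hW; lia.
have hn2 := odd_double_half #|T|.
split.
  rewrite -!muln2 in hin hn2; lia.
split.
  move=> heq.
  have heqP : P e = P (sq_graph e) + (#|T|./2).*2 by rewrite -muln2; lia.
  have hcl : forall u v w x, e u v -> e u w -> e w x -> x != u -> e v x.
    have ht := tight hs hi (S := setT); rewrite hPe hPq cardsT in ht.
    move=> u v w x h1 h2 h3 h4; rewrite -hres; apply: (ht heqP u v w x) => //; by rewrite hres.
  have hall : forall C, C \in components e -> exists A B, bip e C A B.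
    by move=> C /imsetP [x _ ->]; exact: bip_exists.
  have hsD := hkey hall; rewrite hS1 hS2 in hsD.
  have hsum : \sum_(C in components e) D C <= 1.
    move: hsD heqP hn2; rewrite -!muln2; move: (\sum_(C in _) D C) => s; lia.
  split.
    move=> C hC; have [A [B hb]] := hall C hC.
    have [hW _] := hdelta C A B hC hb.
    have hDC : D C <= 1.
      apply: leq_trans hsum; rewrite (bigD1 C) //=; exact: leq_addr.
    have hDC' : D C = ((#|A| - #|B|) + (#|B| - #|A|)) ^ 2 by rewrite /D hW; lia.
    have [_ [_ h3]] := arith_odd #|A| #|B|.
    rewrite hDC' in hDC; have [ha hb'] := h3 hDC.
    exists A, B; have [hU hD hR] := hb; by split.
  rewrite hodd; apply: leq_trans hsum; apply: leq_sum => C hC.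
  have [A [B hb]] := hall C hC.
  have [hW hc] := hdelta C A B hC hb.
  have [h1 _] := arith_odd #|A| #|B|.
  by rewrite hc /D hW addKn.
move=> [hbal hodd1].
have hall : forall C, C \in components e -> exists A B, bip e C A B.
  move=> C hC; have [A [B [hU hD hR _]]] := hbal C hC; by exists A, B; split.
have hsD := hkey hall; rewrite hS1 hS2 in hsD.
have hDodd : \sum_(C in components e) D C = \sum_(C in components e) odd #|C|.
  apply: eq_bigr => C hC; have [A [B [hU hD hR [ha hb]]]] := hbal C hC.
  have hb0 : bip e C A B by split.
  have [hW hc] := hdelta C A B hC hb0.
  have [_ [h2 _]] := arith_odd #|A| #|B|.
  by rewrite /D hW addKn hc h2.
have hpar : odd #|T| = odd (\sum_(C in components e) odd #|C|).
  rewrite -hn.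
  have -> : \sum_(C in components e) #|C| =
     \sum_(C in components e) odd #|C| + (\sum_(C in components e) #|C|./2).*2.
    rewrite -muln2 big_distrl /= -big_split /=; apply: eq_bigr => C _.
    by rewrite muln2 odd_double_half.
  by rewrite oddD odd_double addbF.
rewrite -hodd in hDodd hpar.
have hk : \sum_(C in components e) D C = odd #|T|.
  by rewrite hDodd hpar; move: hodd1; case: #|_| => [|[|]].
rewrite hk in hsD.
rewrite -!muln2 in hE1 hE2 hn2; lia.
Qed.
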